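(* Let $G$ be an abelian group, let $n\geq 1$, let $X\subseteq G$ be a finite, nonempty subset, let $\mathscr A=A_1\cdot\ldots\cdot A_n$ be a setpartition over $G$, let $H=\mathsf H(X+\sum_{i=1}^{n}A_i)$ and let $Z=\bigcap_{i=1}^n(A_i+H)$. Suppose $\sum_{i=1}^{n}|A_i|\leq 2n$, $|A_i\setminus Z|\leq 1$ for all $i\in [1,n]$, and $|X+\sum_{i=1}^{n}A_i|< |X+H|+\big(\sum_{i=1}^{n}|A_i|-n\big)|H|$. Then $H$ is nontrivial and $Z=\alpha+H$ for some $\alpha\in G$.
   Context: A setpartition over $G$ is a finite unordered list $\mathscr A=A_1\cdot\ldots\cdot A_n$ of finite nonempty subsets of $G$. $\mathsf H(A)=\{g\in G:g+A=A\}$ is the stabilizer. Sumsets $A_1+\dots+A_n=\{a_1+\dots+a_n:a_i\in A_i\}$. *)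

(* Defs.v *)
From HB Require Import structures.
From mathcomp Require Import all_boot all_algebra.
From mathcomp Require Export finmap.
Set Implicit Arguments. Unset Strict Implicit. Unset Printing Implicit Defensive.
Import GRing.Theory.
Local Open Scope fset_scope.
Local Open Scope ring_scope.

Definition fsumset (G : zmodType) (A B : {fset G}) : {fset G} :=
  [fset a + b | a in A, b in B].

Definition sumsets (G : zmodType) (s : seq {fset G}) : {fset G} :=
  foldr (@fsumset G) [fset (0 : G)] s.

Definition ftranslate (G : zmodType) (g : G) (A : {fset G}) : {fset G} :=
  [fset g + a | a in A].

(* Main.v *)
Require Import Defs.
From mathcomp Require Import all_boot all_algebra finmap.
From mathcomp Require Import zify.
Import GRing.Theory.
Local Open Scope fset_scope.
Local Open Scope ring_scope.

Section S.
Context {G : zmodType}.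
Implicit Types A B C Y W H : {fset G}.

Lemma memS A B x : x \in fsumset A B <-> exists a b, [/\ a \in A, b \in B & x = a + b].
Proof.
split; first by move=> /imfset2P [a ha [b hb ->]]; exists a, b.
by move=> [a [b [ha hb ->]]]; apply/imfset2P; exists a => //; exists b.
Qed.

Lemma memS' A B a b : a \in A -> b \in B -> a + b \in fsumset A B.
Proof. by move=> ha hb; apply/memS; exists a, b. Qed.

Lemma memT g A x : (x \in ftranslate g A) = (x - g \in A).
Proof.
apply/imfsetP/idP => [[a ha ->]|h]; first by rewrite addrC addKr.
by exists (x - g) => //; rewrite addrC subrK.
Qed.

Lemma cardT g A : #|` ftranslate g A| = #|` A|.
Proof. by rewrite card_imfset //= => x y /addrI. Qed.

Lemma sumsA A B C : fsumset A (fsumset B C) = fsumset (fsumset A B) C.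
Proof.
apply/fsetP => x; apply/idP/idP.
  move/memS => [a [y [ha /memS [b [c [hb hc ->]]] ->]]].
  by rewrite addrA; apply: memS' => //; apply: memS'.
move/memS => [y [c [/memS [a [b [ha hb ->]]] hc ->]]].
by rewrite -addrA; apply: memS' => //; apply: memS'.
Qed.

Lemma sumsC A B : fsumset A B = fsumset B A.
Proof.
apply/fsetP => x; apply/idP/idP => /memS [a [b [ha hb ->]]];
  by rewrite addrC; apply: memS'.
Qed.

Lemma card_sums_ge Y B b : b \in B -> (#|` Y| <= #|` fsumset Y B|)%N.
Proof.
move=> hb; rewrite -(cardT b Y); apply: fsubset_leq_card; apply/fsubsetP => x.
rewrite memT => hx; rewrite -(subrK b x); exact: memS'.
Qed.

Definition per g Y := forall y, y \in Y -> g + y \in Y.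

Lemma per_sums g Y W : per g Y -> per g (fsumset Y W).
Proof.
move=> hp x /memS [y [w [hy hw ->]]]; rewrite addrA; apply: memS' => //; exact: hp.
Qed.

Definition good H B := has (fun a => has (fun a' => (a' - a) \notin H) B) B.

Lemma step H Y B :
  (forall h, h \in H -> -h \in H) ->
  (forall y h, y \in Y -> h \in H -> y + h \in Y) ->
  B != fset0 ->
  (forall g, per g Y -> g \in H) ->
  (#|` Y| + good H B * #|` H| <= #|` fsumset Y B|)%N.
Proof.
move=> hN hY /fset0Pn [b hb] hst.
case hg: (good H B); last by rewrite mul0n addn0; exact: card_sums_ge hb.
move/hasP: hg => [a ha /hasP [a' ha' hn]].
have : ~~ all (fun y => (a' - a) + y \in Y) Y.
  apply/negP => /allP hall; move/negP: hn; apply; apply: hst => y hy; exact: hall.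
move/allPn => [y hy hny].
rewrite mul1n.
have hsub : ftranslate a Y `|` ftranslate (y + a') H `<=` fsumset Y B.
  apply/fsubsetP => x; rewrite in_fsetU !memT => /orP [hx|hx].
    by rewrite -(subrK a x); apply: memS'.
  have -> : x = (y + (x - (y + a'))) + a' by rewrite [RHS]addrC addrA (addrC a' y) addrC subrK.
  apply: memS' => //; exact: hY.
have hdis : ftranslate a Y `&` ftranslate (y + a') H = fset0.
  apply/fsetP => x; rewrite in_fsetI !memT in_fset0; apply/negP => /andP [h1 h2].
  move/negP: hny; apply.
  have := hY _ _ h1 (hN _ h2).
  have -> : a' - a + y = (x - a) + -(x - (y + a')).
    by rewrite opprB [RHS]addrC [RHS]addrA subrK [LHS]addrAC (addrC a' y).
  by [].
have := fsubset_leq_card hsub; have := cardfsUI (ftranslate a Y) (ftranslate (y + a') H).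
by rewrite hdis cardfs0 addn0 !cardT => ->.
Qed.

Lemma sums0 Y : fsumset Y [fset (0 : G)] = Y.
Proof.
apply/fsetP => x; apply/idP/idP.
  by move/memS => [y [z [hy]]]; rewrite in_fset1 => /eqP -> ->; rewrite addr0.
by move=> hx; rewrite -(addr0 x); apply: memS'; rewrite ?in_fset1.
Qed.

Lemma chain H (L : seq {fset G}) : forall Y,
  (forall h, h \in H -> -h \in H) ->
  (forall y h, y \in Y -> h \in H -> y + h \in Y) ->
  (forall B, B \in L -> B != fset0) ->
  (forall g, per g (fsumset Y (sumsets L)) -> g \in H) ->
  (#|` Y| + count (good H) L * #|` H| <= #|` fsumset Y (sumsets L)|)%N.
Proof.
elim: L => [|B L IH] Y hN hY hne hst.
  by rewrite /= mul0n addn0 sums0.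
have hB : B != fset0 by apply: hne; rewrite inE eqxx.
rewrite /= sumsA.
have h1 := @step H Y B hN hY hB (fun g hg => hst g (@per_sums g Y _ hg)).
have h2 := IH (fsumset Y B) hN.
rewrite mulnDl addnA; apply: (leq_trans _ (h2 _ _ _)); first by rewrite leq_add2r.
- move=> x h /memS [y [b [hy hb ->]]] hh; rewrite addrAC; apply: memS' => //; exact: hY.
- by move=> C hC; apply: hne; rewrite inE hC orbT.
- by move=> g; rewrite -sumsA; apply: hst.
Qed.

Lemma count_sum n (P : pred 'I_n) : count P (enum 'I_n) = (\sum_(i < n) P i)%N.
Proof. by rewrite -sum1_count big_mkcond /= big_enum. Qed.

Lemma key_arith n (f : 'I_n -> nat) (g : 'I_n -> bool) :
  (\sum_i f i <= 2*n)%N -> ((forall i, f i <= 1 + g i)%N \/ (forall i, g i)) ->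
  (\sum_i f i - n <= \sum_i g i)%N.
Proof.
move=> hs [h|h].
  have : (\sum_i f i <= \sum_i (1 + g i))%N by apply: leq_sum => i _; exact: h.
  rewrite big_split /= sum_nat_const card_ord muln1; lia.
have -> : (\sum_i (g i : nat) = \sum_(i < n) 1)%N by apply: eq_bigr => i _; rewrite h.
rewrite sum_nat_const card_ord muln1; lia.
Qed.

Lemma e2 (x a y a' : G) : a' - a + y = (x - a) + -(x - (y + a')).
Proof. by rewrite opprB [RHS]addrC [RHS]addrA subrK [LHS]addrAC (addrC a' y). Qed.
End S.


Theorem lemma3p1 (G : zmodType) (n : nat) (X : {fset G}) (A : 'I_n -> {fset G})
    (H Z : {fset G}) :
  (1 <= n)%N ->
  X != fset0 ->
  (forall i, A i != fset0) ->
  (* H = stabilizer of S := X + A_1 + ... + A_n *)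
  (forall g : G, g \in H <->
     ftranslate g (fsumset X (sumsets [seq A i | i <- enum 'I_n]))
     = fsumset X (sumsets [seq A i | i <- enum 'I_n])) ->
  (* Z = intersection over i of (A_i + H) *)
  (forall z : G, z \in Z <-> (forall i, z \in fsumset (A i) H)) ->
  (\sum_(i < n) #|` A i| <= 2 * n)%N ->
  (forall i, (#|` A i `\` Z| <= 1)%N) ->
  (#|` fsumset X (sumsets [seq A i | i <- enum 'I_n])|
     < #|` fsumset X H| + ((\sum_(i < n) #|` A i|) - n) * #|` H|)%N ->
  H != [fset (0 : G)] /\ exists alpha : G, Z = ftranslate alpha H.
Proof.
move=> hn hX hA hH hZ hsum hdiff hlt.
set L := [seq A i | i <- enum 'I_n] in hH hlt.
set S := fsumset X (sumsets L) in hH hlt.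
have perH : forall g, g \in H <-> per g S.
  move=> g; split.
    move=> /hH e y hy; rewrite -e memT.
    by rewrite addrC addKr.
  move=> hp; apply/hH/eqP; rewrite eqEfcard cardT leqnn andbT.
  apply/fsubsetP => x; rewrite memT => /hp; by rewrite addrC subrK.
have H0 : 0 \in H by apply/perH => y; rewrite add0r.
have HD : forall g h, g \in H -> h \in H -> g + h \in H.
  move=> g h /perH hg /perH hh; apply/perH => y hy; rewrite -addrA; exact/hg/hh.
have HN : forall g, g \in H -> - g \in H.
  move=> g /hH e; apply/perH => y hy.
  by move: hy; rewrite -{1}e memT addrC.
have eT : fsumset (fsumset X H) (sumsets L) = S.
  apply/fsetP => x; apply/idP/idP.
    move/memS => [y [w [/memS [x0 [h [hx0 hh ->]]] hw ->]]].
    rewrite addrAC addrC; apply: ((perH h).1 hh); exact: memS'.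
  move/memS => [x0 [w [hx0 hw ->]]]; rewrite -(addr0 x0); apply: memS' => //.
  exact: memS'.
have hchain := @chain G H L (fsumset X H) HN.
have hc : (#|` fsumset X H| + count (good H) L * #|` H| <= #|` S|)%N.
  rewrite -eT; apply: hchain.
  - move=> x h /memS [x0 [h0 [hx0 hh0 ->]]] hh; rewrite -addrA; apply: memS' => //.
    exact: HD.
  - by move=> B /mapP [i _ ->].
  - by move=> g; rewrite eT => /perH.
have key : ((\sum_(i < n) #|` A i|) - n <= \sum_(i < n) good H (A i))%N ->
    False.
  move=> k; rewrite /L count_map count_sum in hc.
  have := leq_mul2r #|` H| ((\sum_(i < n) #|` A i|) - n) (\sum_(i < n) good H (A i)).
  rewrite k orbT => hm.
  move: hlt hc hm; rewrite /preim /=; lia.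
have hZH : forall i z, z \in Z -> exists a h, [/\ a \in A i, h \in H & z = a + h].
  by move=> i z /hZ /(_ i) /memS.
case: (fset_0Vmem Z) => [Z0|[z hz]].
  exfalso; apply: key; apply: key_arith => //; left => i.
  by have := hdiff i; rewrite Z0 fsetD0 => h; apply: leq_trans h _.
case hall: (all (fun w => w - z \in H) Z); last first.
  exfalso; move/allPn: hall => [w hw hwz].
  apply: key; apply: key_arith => //; right => i.
  have [a [h [ha hh ez]]] := hZH i z hz.
  have [a' [h' [ha' hh' ew]]] := hZH i w hw.
  apply/hasP; exists a => //; apply/hasP; exists a' => //.
  apply/negP => hin; move/negP: hwz; apply.
  have -> : w - z = (a' - a) + (h' + - h).
    by rewrite ew ez opprD addrACA.
  by apply: (HD _ _ hin); apply: (HD _ _ hh'); exact: (HN _ hh).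
have eZ : Z = ftranslate z H.
  apply/fsetP => x; rewrite memT; apply/idP/idP; first by move/allP: hall => /(_ x).
  move=> hx; apply/hZ => i.
  have [a [h [ha hh ez]]] := hZH i z hz.
  have -> : x = a + (h + (x - z)) by rewrite addrA -ez addrC subrK.
  by apply: memS' => //; apply: (HD _ _ hh).
split; last by exists z.
apply/negP => /eqP H1.
apply: key; apply: key_arith => //; left => i.
case hg: (good H (A i)).
  have hZ1 : #|` Z| = 1%N by rewrite eZ cardT H1 cardfs1.
  have := hdiff i; rewrite cardfsD.
  have : (#|` A i `&` Z| <= #|` Z|)%N by apply: fsubset_leq_card; exact: fsubsetIr.
  rewrite hZ1 /=; lia.
have /fset0Pn [a ha] := hA i.
have : A i `<=` [fset a].
  apply/fsubsetP => a' ha'; move/negbT/hasPn: hg => /(_ a ha) /hasPn /(_ a' ha').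
  rewrite negbK H1 !in_fset1 subr_eq0; done.
move/fsubset_leq_card; rewrite cardfs1 /=; lia.
Qed.
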